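(* Let $\mathbb{X}\subseteq\mathbb{P}^2$ be a $\Bbbk$-configuration of type $(d_1,\dots,d_s)$ with $s\ge2$. Then there exist subsets $\mathbb{X}_1,\dots,\mathbb{X}_s$ and lines $\mathbb{L}_1,\dots,\mathbb{L}_s$ defining $\mathbb{X}$ as a $\Bbbk$-configuration of type $(d_1,\dots,d_s)$, and an integer $r$ with $1\le r\le s$, such that $|\mathbb{L}_{s-j}\cap\mathbb{X}|=d_s$ for all $0\le j\le r-1$ and $|\mathbb{L}_{s-j}\cap\mathbb{X}|<d_s$ for all $r\le j\le s-1$.
   Context: $\Bbbk$ is an algebraically closed field. A $\Bbbk$-configuration of type $(d_1,\dots,d_s)$ is a finite set $\mathbb{X}\subseteq\mathbb{P}^2$ for which there exist integers $1\le d_1<\cdots<d_s$, subsets $\mathbb{X}_1,\dots,\mathbb{X}_s$ of $\mathbb{X}$ and distinct lines $\mathbb{L}_1,\dots,\mathbb{L}_s\subseteq\mathbb{P}^2$ such that (1) $\mathbb{X}=\bigcup_{i=1}^s\mathbb{X}_i$; (2) $|\mathbb{X}_i|=d_i$ and $\mathbb{X}_i\subseteq\mathbb{L}_i$ for each $i$; (3) for $1<i\le s$, $\mathbb{L}_i$ contains no point of $\mathbb{X}_j$ for any $j<i$. We say $\mathbb{X}$ is defined by these subsets and lines; such defining data need not be unique. *)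

(* Defs.v *)
From HB Require Import structures.
From mathcomp Require Import all_boot all_order all_algebra.
Set Implicit Arguments. Unset Strict Implicit. Unset Printing Implicit Defensive.
Import GRing.Theory.
Local Open Scope ring_scope.

(* Points (and, dually, lines) of P^2 over a field K are represented by their
   unique normalized homogeneous coordinates (x, y, z): the first nonzero
   coordinate equals 1.  Every point of P^2 has exactly one such representative,
   so Leibniz equality of [ppoint K] is equality of projective points. *)
Definition normalized (K : fieldType) (p : K * K * K) : bool :=
  let: (x, y, z) := p in
  [|| x == 1, (x == 0) && (y == 1) | [&& x == 0, y == 0 & z == 1]].

Record ppoint (K : fieldType) := PPoint {
  pcoords :> K * K * K;
  _ : normalized pcoords }.

HB.instance Definition _ (K : fieldType) := [isSub for @pcoords K].
HB.instance Definition _ (K : fieldType) := [Equality of ppoint K by <:].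

(* A line is given by its (normalized) dual coordinates (a, b, c), i.e. it is
   the line a X + b Y + c Z = 0. *)
Definition pline (K : fieldType) := ppoint K.

Definition on_line (K : fieldType) (L : pline K) (P : ppoint K) : bool :=
  let: (a, b, c) := pcoords L in
  let: (x, y, z) := pcoords P in
  a * x + b * y + c * z == 0.

Definition config_type (s : nat) (d : nat -> nat) : Prop :=
  (1 <= s)%N /\ (1 <= d 1)%N /\ (forall i, (1 <= i)%N -> (i < s)%N -> (d i < d i.+1)%N).

(* X (a finite set, given as a duplicate-free list) is defined as a
   k-configuration of type d by the subsets Xs 1, ..., Xs s and lines
   Ls 1, ..., Ls s. *)
Definition defines_config (K : fieldType) (X : seq (ppoint K)) (s : nat)
    (d : nat -> nat) (Xs : nat -> seq (ppoint K)) (Ls : nat -> pline K) : Prop :=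
  [/\ config_type s d,
      (forall P, P \in X <-> exists2 i, (1 <= i <= s)%N & P \in Xs i),
      (forall i, (1 <= i <= s)%N ->
         [/\ uniq (Xs i), size (Xs i) = d i & all (on_line (Ls i)) (Xs i)]),
      (forall i j, (1 <= i <= s)%N -> (1 <= j <= s)%N -> i != j -> Ls i != Ls j) &
      (forall i j, (1 <= j)%N -> (j < i)%N -> (i <= s)%N ->
         ~~ has (on_line (Ls i)) (Xs j))].

Definition is_kconfig (K : fieldType) (X : seq (ppoint K)) (s : nat) (d : nat -> nat) : Prop :=
  uniq X /\ exists Xs Ls, defines_config X s d Xs Ls.

Definition card_on_line (K : fieldType) (L : pline K) (X : seq (ppoint K)) : nat :=
  size (filter (on_line L) X).

(* Main.v *)
Require Import Defs.
From HB Require Import structures.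
From mathcomp Require Import all_boot all_order all_algebra.
From mathcomp Require Import ring zify.
Set Implicit Arguments. Unset Strict Implicit. Unset Printing Implicit Defensive.
Import GRing.Theory.
Section Geo.
Variable K : fieldType.
Local Open Scope ring_scope.

Lemma key1 (l1 l2 l3 k1 k2 k3 n1 n2 n3 : K) : n1 != 0 ->
  l1 * n2 = l2 * n1 -> l1 * n3 = l3 * n1 -> l2 * n3 = l3 * n2 ->
  k1 * n2 = k2 * n1 -> k1 * n3 = k3 * n1 -> k2 * n3 = k3 * n2 ->
  [/\ l1 * k2 = l2 * k1, l1 * k3 = l3 * k1 & l2 * k3 = l3 * k2].
Proof.
move=> n0 hl1 hl2 hl3 hk1 hk2 hk3.
have E : forall x y : K, (x - y) * n1 = 0 -> x = y.
  move=> x y h; apply/eqP; rewrite -subr_eq0; apply/eqP; apply: (mulIf n0).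
  by rewrite mul0r.
split; apply: E.
- have -> : (l1 * k2 - l2 * k1) * n1 = l1 * (k2 * n1 - k1 * n2) + k1 * (l1 * n2 - l2 * n1) by ring.
  by rewrite hk1 hl1 !subrr !mulr0 addr0.
- have -> : (l1 * k3 - l3 * k1) * n1 = l1 * (k3 * n1 - k1 * n3) + k1 * (l1 * n3 - l3 * n1) by ring.
  by rewrite hk2 hl2 !subrr !mulr0 addr0.
- apply: (mulIf n0); rewrite mul0r.
  have -> : (l2 * k3 - l3 * k2) * n1 * n1 = (l2 * n1) * (k3 * n1) - (l3 * n1) * (k2 * n1) by ring.
  rewrite -hl1 -hl2 -hk1 -hk2; ring.
Qed.

Lemma key (l1 l2 l3 k1 k2 k3 n1 n2 n3 : K) :
  ~~ [&& n1 == 0, n2 == 0 & n3 == 0] ->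
  l1 * n2 = l2 * n1 -> l1 * n3 = l3 * n1 -> l2 * n3 = l3 * n2 ->
  k1 * n2 = k2 * n1 -> k1 * n3 = k3 * n1 -> k2 * n3 = k3 * n2 ->
  [/\ l1 * k2 = l2 * k1, l1 * k3 = l3 * k1 & l2 * k3 = l3 * k2].
Proof.
move=> nz hl1 hl2 hl3 hk1 hk2 hk3.
have [e1|n0] := eqVneq n1 0; last exact: (key1 n0 hl1 hl2 hl3 hk1 hk2 hk3).
have [e2|n0] := eqVneq n2 0.
  have [e3|n0] := eqVneq n3 0; first by move: nz; rewrite e1 e2 e3 eqxx.
  have [] := @key1 l3 l1 l2 k3 k1 k2 n3 n1 n2 n0 (esym hl2) (esym hl3) hl1
      (esym hk2) (esym hk3) hk1.
  by move=> *; split.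
have [] := @key1 l2 l1 l3 k2 k1 k3 n2 n1 n3 n0 (esym hl1) hl3 hl2
    (esym hk1) hk3 hk2.
by move=> *; split.
Qed.

Definition crossz (u v : K * K*K) : Prop :=
  let: (u1,u2,u3) := u in let: (v1,v2,v3) := v in
  [/\ u1 * v2 = u2 * v1, u1 * v3 = u3 * v1 & u2 * v3 = u3 * v2].

Lemma crossz_eq (u v : ppoint K) : crossz u v -> u = v.
Proof.
case: u v => [[[u1 u2] u3] nu] [[[v1 v2] v3] nv] /= h; apply: val_inj => /=.
move: nu nv h; rewrite /normalized.
move=> /or3P[/eqP->|/andP[/eqP-> /eqP->]|/and3P[/eqP-> /eqP-> /eqP->]]
       /or3P[/eqP->|/andP[/eqP-> /eqP->]|/and3P[/eqP-> /eqP-> /eqP->]] [h1 h2 h3];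
  rewrite ?mul1r ?mulr1 ?mul0r ?mulr0 in h1 h2 h3;
  rewrite ?h1 ?h2 ?h3 //;
  try (by move/eqP: h1; rewrite ?oner_eq0 // eq_sym oner_eq0);
  try (by move/eqP: h2; rewrite ?oner_eq0 // eq_sym oner_eq0);
  try (by move/eqP: h3; rewrite ?oner_eq0 // eq_sym oner_eq0).
Qed.

Lemma two_lines (L L' P Q : ppoint K) : L != L' -> P != Q ->
  on_line L P -> on_line L Q -> on_line L' P -> on_line L' Q -> False.
Proof.
move=> nL nP.
have cL : ~ crossz L L' by move/crossz_eq/eqP; rewrite (negbTE nL).
have cP : ~ crossz P Q by move/crossz_eq/eqP; rewrite (negbTE nP).
move: cL cP; rewrite /on_line /crossz.
case: L L' P Q {nL nP} => [[[l1 l2] l3] _] [[[k1 k2] k3] _] [[[p1 p2] p3] _] [[[q1 q2] q3] _] /=.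
move=> cL cP /eqP lp /eqP lq /eqP mp /eqP mq; apply: cL.
set n1 := p2 * q3 - p3 * q2; set n2 := p3 * q1 - p1 * q3; set n3 := p1 * q2 - p2 * q1.
have nz : ~~ [&& n1 == 0, n2 == 0 & n3 == 0].
  apply/negP => /and3P[/eqP e1 /eqP e2 /eqP e3]; apply: cP.
  split; apply/eqP; rewrite -subr_eq0; apply/eqP.
  - exact: e3.
  - by apply/eqP; rewrite -oppr_eq0 opprB; apply/eqP.
  - exact: e1.
have G : forall a1 a2 a3 : K, a1 * p1 + a2 * p2 + a3 * p3 = 0 -> a1 * q1 + a2 * q2 + a3 * q3 = 0 ->
   [/\ a1 * n2 = a2 * n1, a1 * n3 = a3 * n1 & a2 * n3 = a3 * n2].
  move=> a1 a2 a3 ap aq.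
  split; apply/eqP; rewrite -subr_eq0; apply/eqP.
  - have -> : a1 * n2 - a2 * n1 = p3 * (a1 * q1 + a2 * q2 + a3 * q3) - q3 * (a1 * p1 + a2 * p2 + a3 * p3)
      by rewrite /n1 /n2; ring.
    by rewrite ap aq !mulr0 subrr.
  - have -> : a1 * n3 - a3 * n1 = q2 * (a1 * p1 + a2 * p2 + a3 * p3) - p2 * (a1 * q1 + a2 * q2 + a3 * q3)
      by rewrite /n1 /n3; ring.
    by rewrite ap aq !mulr0 subrr.
  - have -> : a2 * n3 - a3 * n2 = p1 * (a1 * q1 + a2 * q2 + a3 * q3) - q1 * (a1 * p1 + a2 * p2 + a3 * p3)
      by rewrite /n2 /n3; ring.
    by rewrite ap aq !mulr0 subrr.
have [h1 h2 h3] := G _ _ _ lp lq.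
have [j1 j2 j3] := G _ _ _ mp mq.
exact: key nz h1 h2 h3 j1 j2 j3.
Qed.
End Geo.
Section Comb.
Variables (K : fieldType) (X : seq (ppoint K)) (s : nat) (d : nat -> nat).
Hypothesis uX : uniq X.

Lemma size_le1 (T : eqType) (t : seq T) : uniq t ->
  (forall x y, x \in t -> y \in t -> x = y) -> size t <= 1.
Proof.
case: t => [//|x [//|y t]] /= /andP[] + _ h.
by rewrite in_cons (h x y) ?inE ?eqxx ?orbT.
Qed.

Lemma sumn_le1 (f : nat -> nat) (r : seq nat) :
  (forall j, j \in r -> f j <= 1) -> sumn (map f r) <= size r.
Proof.
elim: r => [//|a r IH] h /=.
have := h a (mem_head _ _); have := IH (fun j jr => h j (mem_behead (s:=a :: r) jr)).
lia.
Qed.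

Section Data.
Variables (Xs : nat -> seq (ppoint K)) (Ls : nat -> pline K).
Hypothesis D : defines_config X s d Xs Ls.

Lemma meet_one i j P Q : 1 <= i -> i < j -> j <= s -> P \in Xs j -> Q \in Xs j ->
  on_line (Ls i) P -> on_line (Ls i) Q -> P = Q.
Proof.
case: D => _ _ sz inj _ i1 ij js PX QX PL QL.
have jr : 1 <= j <= s by apply/andP; split => //; lia.
have [_ _ /allP al] := sz j jr.
case: (eqVneq P Q) => // nPQ; exfalso.
apply: (two_lines _ nPQ PL QL (al _ PX) (al _ QX)).
apply: inj; try lia; apply/andP; split; lia.
Qed.

Lemma count_bound i : 1 <= i <= s ->
  card_on_line (Ls i) X <= d i + sumn [seq size (filter (on_line (Ls i)) (Xs j)) | j <- iota i.+1 (s - i)].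
Proof.
move=> ir; case: D => _ mem sz _ av.
have [_ <- _] := sz i ir.
rewrite /card_on_line.
have -> : sumn [seq size (filter (on_line (Ls i)) (Xs j)) | j <- iota i.+1 (s - i)]
   = size (flatten [seq filter (on_line (Ls i)) (Xs j) | j <- iota i.+1 (s - i)]).
  by rewrite size_flatten /shape -map_comp.
rewrite -size_cat; apply: uniq_leq_size; first exact: filter_uniq.
move=> x; rewrite mem_filter => /andP[xL /mem [j jr xj]].
rewrite mem_cat.
case: (ltngtP j i) => [ji|ij|eji]; last by rewrite -eji xj.
- move: jr ir => /andP[j1 _] /andP[_ iS].
  by have /hasPn /(_ x xj) := av i j j1 ji iS; rewrite xL.
- apply/orP; right; apply/flattenP; exists (filter (on_line (Ls i)) (Xs j)).
    apply/mapP; exists j => //; rewrite mem_iota; move: jr => /andP[_ js]; lia.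
  by rewrite mem_filter xL.
Qed.

Lemma dmono a b : 1 <= a -> a <= b -> b <= s -> d a + (b - a) <= d b.
Proof.
case: D => [[_ [_ inc]] _ _ _ _] a1.
elim: b => [|b IH]; first lia.
rewrite leq_eqVlt => /orP[/eqP->|ab] bs; first by rewrite subnn addn0.
have := IH ab (ltnW bs); have := inc b (leq_trans a1 ab) bs; lia.
Qed.

Lemma filter_le1 i j : 1 <= i -> i < j -> j <= s ->
  size (filter (on_line (Ls i)) (Xs j)) <= 1.
Proof.
move=> i1 ij js; apply: size_le1.
  apply: filter_uniq; case: D => _ _ sz _ _.
  by have [] := sz j ltac:(apply/andP; split; lia).
move=> x y; rewrite !mem_filter => /andP[xL xj] /andP[yL yj].
exact: (meet_one i1 ij js xj yj xL yL).
Qed.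

Lemma card_le i : 1 <= i <= s -> card_on_line (Ls i) X <= d s.
Proof.
move=> ir; have := count_bound ir.
have : sumn [seq size (filter (on_line (Ls i)) (Xs j)) | j <- iota i.+1 (s - i)] <= s - i.
  rewrite -[X in _ <= X](size_iota i.+1); apply: sumn_le1 => j; rewrite mem_iota => jr.
  apply: filter_le1; lia.
have := @dmono i s; move: ir => /andP[i1 iS]; move/(_ i1 iS (leqnn s)); lia.
Qed.

Lemma card_ge i : 1 <= i <= s -> d i <= card_on_line (Ls i) X.
Proof.
move=> ir; case: D => _ mem sz _ _.
have [u <- /allP al] := sz i ir.
apply: uniq_leq_size => // x xi; rewrite mem_filter al //=.
by apply/mem; exists i.
Qed.

Lemma full_next i : 1 <= i -> i < s -> card_on_line (Ls i) X = d s ->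
  d i.+1 = (d i).+1 /\ exists2 P, P \in Xs i.+1 & on_line (Ls i) P.
Proof.
move=> i1 iS cf.
have := count_bound (i := i) ltac:(apply/andP; split; lia).
have -> : s - i = (s - i.+1).+1 by lia.
rewrite /= cf.
have : sumn [seq size (filter (on_line (Ls i)) (Xs j)) | j <- iota i.+2 (s - i.+1)] <= s - i.+1.
  rewrite -[X in _ <= X](size_iota i.+2); apply: sumn_le1 => j; rewrite mem_iota => jr.
  apply: filter_le1; lia.
have := @dmono i s i1 (ltnW iS) (leqnn s).
have := @dmono i.+1 s ltac:(lia) iS (leqnn s).
have := @filter_le1 i i.+1 i1 (ltnSn i) iS.
case: D => [[_ [_ inc]] _ _ _ _]; have := inc i i1 iS.
case E: (filter (on_line (Ls i)) (Xs i.+1)) => [|P t] /=; first lia.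
move=> *; split; first lia.
have : P \in filter (on_line (Ls i)) (Xs i.+1) by rewrite E mem_head.
by rewrite mem_filter => /andP[PL PX]; exists P.
Qed.

Definition tr (i k : nat) := if k == i then i.+1 else if k == i.+1 then i else k.

Lemma trK i k : tr i (tr i k) = k.
Proof.
rewrite /tr; case: (eqVneq k i) => [->|ki]; first by rewrite eqxx (gtn_eqF (ltnSn i)).
case: (eqVneq k i.+1) => [->|ki1]; first by rewrite eqxx.
by rewrite (negbTE ki) (negbTE ki1).
Qed.

Lemma swap i : 1 <= i -> i < s -> card_on_line (Ls i) X = d s ->
  exists Xs', defines_config X s d Xs' (fun k => Ls (tr i k)).
Proof.
move=> i1 iS cf.
have [dS [P PX PL]] := full_next i1 iS cf.
have D' := D; case: D' => ct mem sz inj av.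
have avx : forall m k x, 1 <= m -> m < k -> k <= s -> x \in Xs m -> ~~ on_line (Ls k) x.
  by move=> m k x m1 mk ks xm; have /hasPn := av k m m1 mk ks; apply.
have [ui szi ali] := sz i ltac:(apply/andP; split; lia).
have [ui1 szi1 ali1] := sz i.+1 ltac:(apply/andP; split; lia).
have PnXi : P \notin Xs i.
  by apply/negP => Pi; have := avx i i.+1 P i1 (ltnSn i) iS Pi; rewrite (allP ali1).
have ii1 : (i.+1 == i) = false by rewrite gtn_eqF.
pose Xs' := fun k => if k == i then rem P (Xs i.+1) else if k == i.+1 then P :: Xs i else Xs k.
exists Xs'; split => //.
- move=> x; rewrite mem; split.
  + case=> j jr xj; case: (eqVneq j i) => [eji|ji].
      exists i.+1; first lia.
      by rewrite /Xs' ii1 eqxx in_cons -eji xj orbT.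
    case: (eqVneq j i.+1) => [eji|ji1].
      case: (eqVneq x P) => [->|xP].
        by exists i.+1; [lia | rewrite /Xs' ii1 eqxx mem_head].
      exists i; first lia.
      by rewrite /Xs' eqxx (mem_rem_uniq _ ui1) inE xP -eji xj.
    by exists j => //; rewrite /Xs' (negbTE ji) (negbTE ji1).
  + case=> j jr; rewrite /Xs'; case: (eqVneq j i) => [_|ji].
      by move/mem_rem => xj; exists i.+1 => //; lia.
    case: (eqVneq j i.+1) => [_|ji1].
      rewrite in_cons => /orP[/eqP->|xi]; first by exists i.+1 => //; lia.
      by exists i => //; lia.
    by move=> xj; exists j.
- move=> k kr; rewrite /Xs' /tr; case: (eqVneq k i) => [ek|ki].
    subst k; split; [exact: rem_uniq | by rewrite size_rem // szi1 dS | ].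
    by apply/allP => x /mem_rem; apply/allP.
  case: (eqVneq k i.+1) => [ek|ki1].
    subst k; by split; [rewrite /= PnXi ui | rewrite /= szi dS | rewrite /= PL ali].
  by apply: sz.
- move=> a b ar br ab; apply: inj.
  + rewrite /tr; case: eqVneq => _; first lia; case: eqVneq => _; lia.
  + rewrite /tr; case: eqVneq => _; first lia; case: eqVneq => _; lia.
  + by apply: contra ab => /eqP e; apply/eqP; rewrite -(trK i a) e trK.
- move=> k j j1 jk ks; apply/hasPn => x; rewrite /Xs'.
  case: (eqVneq j i) => [ej|ji].
    rewrite (mem_rem_uniq _ ui1) inE => /andP[xP xX].
    rewrite /tr; case: (eqVneq k i) => [ek|ki]; first lia.
    case: (eqVneq k i.+1) => [ek|ki1].
      apply/negP => xL; move/eqP: xP; apply.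
      exact: (meet_one i1 (ltnSn i) iS xX PX xL PL).
    by apply: (avx i.+1) => //; lia.
  case: (eqVneq j i.+1) => [ej|ji1].
    rewrite in_cons => /orP[/eqP->|xi];
      (rewrite /tr; case: (eqVneq k i) => [ek|ki]; first lia;
       case: (eqVneq k i.+1) => [ek|ki1]; first lia).
      by apply: (avx i.+1) => //; lia.
    by apply: (avx i) => //; lia.
  move=> xj; rewrite /tr; case: (eqVneq k i) => [ek|ki].
    by apply: (avx j) => //; lia.
  case: (eqVneq k i.+1) => [ek|ki1].
    by apply: (avx j) => //; lia.
  by apply: (avx j).
Qed.

End Data.
End Comb.

Section Main.
Variables (K : fieldType) (X : seq (ppoint K)) (s : nat) (d : nat -> nat).
Hypothesis uX : uniq X.

Lemma pot (b : nat -> bool) i : 1 <= i -> i < s -> b i -> ~~ b i.+1 ->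
  (sumn [seq b (tr i k) * (s - k) | k <- iota 1 s]).+1 =
   sumn [seq b k * (s - k) | k <- iota 1 s].
Proof.
move=> i1 iS bi bi1.
have E : iota 1 s = iota 1 i.-1 ++ [:: i, i.+1 & iota i.+2 (s - i.+1)].
  have e : s = i.-1 + 2 + (s - i.+1) by lia.
  rewrite [in LHS]e !iotaD.
  have -> : 1 + (i.-1 + 2) = i.+2 by lia.
  have -> : 1 + i.-1 = i by lia.
  by rewrite -catA.
rewrite E !map_cat !sumn_cat /=.
have L1 : [seq b (tr i k) * (s-k) | k <- iota 1 i.-1] = [seq b k * (s-k) | k <- iota 1 i.-1].
  apply/eq_in_map => k; rewrite mem_iota => kr; rewrite /tr ifN; last lia.
  by rewrite ifN //; lia.
have L2 : [seq b (tr i k) * (s-k) | k <- iota i.+2 (s - i.+1)] = [seq b k * (s-k) | k <- iota i.+2 (s - i.+1)].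
  apply/eq_in_map => k; rewrite mem_iota => kr; rewrite /tr ifN; last lia.
  by rewrite ifN //; lia.
rewrite L1 L2 /tr eqxx gtn_eqF // eqxx bi (negbTE bi1) /=.
lia.
Qed.

Definition full (Ls : nat -> pline K) k := card_on_line (Ls k) X == d s.
Definition psi (Ls : nat -> pline K) := sumn [seq full Ls k * (s - k) | k <- iota 1 s].

Lemma sorted_ex n : forall Xs Ls, defines_config X s d Xs Ls -> psi Ls <= n ->
  exists Xs' Ls', defines_config X s d Xs' Ls' /\
    forall i, 1 <= i -> i < s -> full Ls' i -> full Ls' i.+1.
Proof.
elim: n => [|n IH] Xs Ls D pn.
all: case H: (has (fun i => [&& i < s, full Ls i & ~~ full Ls i.+1]) (iota 1 s)).
2,4: exists Xs, Ls; split => // i i1 iS fi; apply: contraT => nf;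
     move/hasPn: H => /(_ i); rewrite mem_iota fi nf iS andbT /= => /(_ ltac:(lia)).
2,3: by [].
all: move/hasP: H => [i]; rewrite mem_iota => /andP[i1 _] /and3P[iS fi nfi].
all: have [Xs' D'] := swap uX D i1 iS (eqP fi).
all: have P := @pot (full Ls) i i1 iS fi nfi.
  by move: P pn; rewrite /psi /full; lia.
apply: (IH Xs' _ D').
by move: P pn; rewrite /psi /full; lia.
Qed.

End Main.
Theorem corollary2p11 (K : closedFieldType) (X : seq (ppoint K)) (s : nat)
    (d : nat -> nat) :
  (2 <= s)%N -> is_kconfig X s d ->
  exists (Xs : nat -> seq (ppoint K)) (Ls : nat -> pline K),
    defines_config X s d Xs Ls /\
    exists r : nat, [/\ (1 <= r <= s)%N,
      (forall j, (j <= r - 1)%N -> card_on_line (Ls (s - j)%N) X = d s) &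
      (forall j, (r <= j <= s - 1)%N -> (card_on_line (Ls (s - j)%N) X < d s)%N)].
Proof.
move=> s2 [uX [Xs [Ls D]]].
have [Xs' [Ls' [D' srt]]] := sorted_ex uX D (leqnn (psi X s d Ls)).
exists Xs', Ls'; split => //.
have mono : forall a b, 1 <= a -> a <= b -> b <= s -> full X s d Ls' a -> full X s d Ls' b.
  move=> a b a1; elim: b => [|b IH]; first lia.
  rewrite leq_eqVlt => /orP[/eqP<-|ab] bs fa //.
  by apply: srt; [lia | lia | apply: IH; [lia|lia|]].
have fs : full X s d Ls' s.
  by rewrite /full eqn_leq (card_le uX D') ?(card_ge D') //; apply/andP; split; lia.
pose P m := (1 <= m) && (m <= s) && full X s d Ls' m.
have exP : exists m, P m by exists s; rewrite /P fs andbT; apply/andP; split; lia.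
case: (ex_minnP exP) => m /andP[/andP[m1 ms] fm] mmin.
exists (s - m).+1; split.
- apply/andP; split; lia.
- move=> j jr; apply/eqP; apply: (mono m) => //; lia.
- move=> j /andP[rj js].
  have cl := card_le uX D' (i := s - j) ltac:(apply/andP; split; lia).
  rewrite ltn_neqAle cl andbT; apply/negP => /eqP fj.
  have : P (s - j) by rewrite /P /full fj eqxx andbT; apply/andP; split; lia.
  move/mmin; lia.
Qed.
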